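(* Each of the two cyclic Steiner triple systems of order $15$ on $\mathbb{Z}_{15}$, namely the one generated (under $i\mapsto i+1 \bmod 15$) by the base blocks $\{0,1,4\},\{0,2,8\},\{0,5,10\}$ and the one generated by the base blocks $\{0,1,4\},\{0,2,9\},\{0,5,10\}$, admits a zero-sum $3$-flow.
   Context: The blocks of the system generated by base blocks are all translates $\{a+i,b+i,c+i\}$ (mod 15) of the base blocks; the base block $\{0,5,10\}$ generates only 5 distinct blocks. For a design $(X,\mathcal{B})$, a zero-sum $3$-flow is a map $f:\mathcal{B}\to\{\pm1,\pm2\}$ such that $\sum_{B\ni x} f(B)=0$ for every point $x\in X$. *)

(* Defs.v *)
From mathcomp Require Import all_boot all_order all_algebra.
Set Implicit Arguments. Unset Strict Implicit. Unset Printing Implicit Defensive.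
Import GRing.Theory Num.Theory.
Local Open Scope ring_scope.

Definition Z15 := 'Z_15.

Definition translate (B : {set Z15}) (i : Z15) : {set Z15} :=
  [set x + i | x in B].

(* The block set generated by a list of base blocks under i |-> i+1 mod 15:
   all distinct translates of all base blocks (as a set, so e.g. {0,5,10}
   contributes only 5 distinct blocks). *)
Definition cyclic_blocks (base : seq {set Z15}) : {set {set Z15}} :=
  \bigcup_(B <- base) [set translate B i | i : Z15].

Definition zero_sum_3flow (T : finType) (blocks : {set {set T}}) : Prop :=
  exists f : {set T} -> int,
    (forall B, B \in blocks -> f B \in [:: 1; -1; 2; -2]) /\
    (forall x : T, \sum_(B in blocks | x \in B) f B = 0).

Definition STS15_A : {set {set Z15}} :=
  cyclic_blocks [:: [set 0; 1; 4]; [set 0; 2; 8]; [set 0; 5; 10]].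
Definition STS15_B : {set {set Z15}} :=
  cyclic_blocks [:: [set 0; 1; 4]; [set 0; 2; 9]; [set 0; 5; 10]].

(* Main.v *)
Require Import Defs.
From mathcomp Require Import all_boot all_order all_algebra.
Set Implicit Arguments. Unset Strict Implicit. Unset Printing Implicit Defensive.
Import GRing.Theory Num.Theory.
Local Open Scope ring_scope.

Section Gen.
Variables a1 b1 c1 a2 b2 c2 a3 b3 c3 : Z15.
Variable v : seq int.

Definition zi (k : nat) : Z15 := inZp k.
Definition pts : seq Z15 := [seq zi n | n <- iota 0 15].
Definition tst (a b c y : Z15) : bool := (y == a) || (y == b) || (y == c).

Definition P1 : {set Z15} := [set a1; b1; c1].
Definition P2 : {set Z15} := [set a2; b2; c2].
Definition P3 : {set Z15} := [set a3; b3; c3].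

Definition blk (k : nat) : {set Z15} :=
  if (k < 15)%N then translate P1 (zi k)
  else if (k < 30)%N then translate P2 (zi (k - 15))
  else translate P3 (zi (k - 30)).

Definition memb (k : nat) (x : Z15) : bool :=
  if (k < 15)%N then tst a1 b1 c1 (x - zi k)
  else if (k < 30)%N then tst a2 b2 c2 (x - zi (k - 15))
  else tst a3 b3 c3 (x - zi (k - 30)).

Definition C1 : bool := all (fun j => all (fun k => (j == k) ||
   has (fun x => memb j x != memb k x) pts) (iota 0 35)) (iota 0 35).
Definition C2 : bool := all (fun i => all (fun x =>
   tst a3 b3 c3 (x - zi i) == tst a3 b3 c3 (x - zi (i %% 5))) pts) (iota 0 15).
Definition C3 : bool := all (fun x =>
   foldr (fun k acc => (if memb k x then nth 0 v k else 0) + acc) 0 (iota 0 35) == 0) pts.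
Definition C4 : bool := all (fun k => nth 0 v k \in [:: 1; -1; 2; -2]) (iota 0 35).

Lemma memT (B : {set Z15}) i x : (x \in translate B i) = (x - i \in B).
Proof.
apply/imsetP/idP => [[y yB ->]|h]; first by rewrite addrK.
by exists (x - i) => //; rewrite subrK.
Qed.

Lemma in3 (a b c x : Z15) : (x \in [set a; b; c]) = tst a b c x.
Proof. by rewrite !inE. Qed.

Lemma mem_blk k x : (x \in blk k) = memb k x.
Proof. by rewrite /blk /memb; case: ifP => _; [|case: ifP => _]; rewrite memT in3. Qed.

Lemma zi_val (i : Z15) : zi i = i.
Proof. exact: valZpK. Qed.

Lemma pts_all x : x \in pts.
Proof.
rewrite -(zi_val x); apply: map_f; rewrite mem_iota /=.
by have := ltn_ord x.
Qed.

Lemma sum_foldr (G : nat -> int) s :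
  \sum_(k <- s) G k = foldr (fun k acc => G k + acc) 0 s.
Proof. by elim: s => [|k s IH]; rewrite ?big_nil ?big_cons ?IH. Qed.

Hypothesis h1 : C1.
Hypothesis h2 : C2.
Hypothesis h3 : C3.
Hypothesis h4 : C4.

Lemma blk_inj (j k : 'I_35) : blk j = blk k -> j = k.
Proof.
move=> e; apply: val_inj => /=.
have hj : (nat_of_ord j \in iota 0 35) by rewrite mem_iota /=.
have hk : (nat_of_ord k \in iota 0 35) by rewrite mem_iota /=.
have := allP (allP h1 _ hj) _ hk; case/orP => [/eqP //|/hasP [x _]].
by rewrite -!mem_blk e eqxx.
Qed.

Lemma blocks_eq : cyclic_blocks [:: P1; P2; P3] = [set blk k | k : 'I_35].
Proof.
apply/setP => B; rewrite /cyclic_blocks !big_cons big_nil !in_setU in_set0 orbF.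
apply/idP/idP.
- case/orP => [|/orP[]] /imsetP [i _ ->]; apply/imsetP.
  + have hi : (nat_of_ord i < 35)%N by apply: (leq_trans (ltn_ord i)).
    exists (Ordinal hi) => //; rewrite /blk /= ltn_ord zi_val //.
  + have hi : (15 + nat_of_ord i < 35)%N by rewrite -[35%N]/(15 + 20)%N ltn_add2l; apply: (leq_trans (ltn_ord i)).
    exists (Ordinal hi) => //; rewrite /blk /=.
    rewrite -[30%N]/(15 + 15)%N ltn_add2l ltn_ord addKn zi_val //.
  + have hm : (nat_of_ord i %% 5 < 5)%N by rewrite ltn_pmod.
    have hi : (30 + nat_of_ord i %% 5 < 35)%N by rewrite -[35%N]/(30 + 5)%N ltn_add2l.
    exists (Ordinal hi) => //; rewrite /blk /=.
    rewrite addKn; apply/setP => x; rewrite !memT !in3.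
    have hI : (nat_of_ord i \in iota 0 15) by rewrite mem_iota /=; have := ltn_ord i.
    by have := allP (allP h2 _ hI) x (pts_all x); rewrite zi_val => /eqP.
- case/imsetP => [k _ ->]; rewrite /blk; case: ifP => _.
    by apply/orP; left; apply/imsetP; exists (zi k).
  case: ifP => _.
    by apply/orP; right; apply/orP; left; apply/imsetP; exists (zi (k - 15)).
  by apply/orP; right; apply/orP; right; apply/imsetP; exists (zi (k - 30)).
Qed.

Definition fl (B : {set Z15}) : int :=
  if [pick k : 'I_35 | B == blk k] is Some k then nth 0 v k else 0.

Lemma fl_blk (k : 'I_35) : fl (blk k) = nth 0 v k.
Proof.
rewrite /fl; case: pickP => [j /eqP e|/(_ k)]; last by rewrite eqxx.
by rewrite (blk_inj e).
Qed.

Lemma gen_flow : zero_sum_3flow (cyclic_blocks [:: P1; P2; P3]).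
Proof.
rewrite blocks_eq; exists fl; split.
  move=> B /imsetP [k _ ->]; rewrite fl_blk.
  by apply: (allP h4); rewrite mem_iota /=.
move=> x; rewrite big_mkcondr /= big_imset /=; last by move=> j k _ _; apply: blk_inj.
rewrite (eq_bigr (fun k : 'I_35 => if memb k x then nth 0 v k else 0)); last first.
  by move=> k _; rewrite mem_blk fl_blk.
rewrite -(big_mkord xpredT (fun k => if memb k x then nth 0 v k else 0)) /index_iota subn0.
by rewrite sum_foldr; apply/eqP; apply: (allP h3); apply: pts_all.
Qed.

End Gen.

Theorem mainTheorem8 : zero_sum_3flow STS15_A /\ zero_sum_3flow STS15_B.
Proof.
split.
- apply: (@gen_flow 0 1 4 0 2 8 0 5 10
   [:: -2; -2; -2; 1; -1; 1; 1; -2; -1; -2; -1; 1; 1; 1; -1; 1; 2; 2; 1; 1; -1; 1; 1; 1; 1; -2; 1; 1; -1; 1; 1; -1; -1; 1; -2]);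
  vm_compute; reflexivity.
- apply: (@gen_flow 0 1 4 0 2 9 0 5 10
   [:: 1; -1; 2; -2; 1; -1; -1; 2; 1; 1; -2; -2; 1; 1; 2; -2; 1; -1; -2; -1; 1; 1; -1; -1; 1; 1; 1; -1; -1; -2; 1; 1; 2; -2; 1]);
  vm_compute; reflexivity.
Qed.
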